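(* Let $\tau$ be a tuple of positive integers, $0\le k\le\ell$, and $\hat P_\tau=C\sqcup O$ the $k$-decomposition. Let $F$ be a nonempty face of $\mathcal{O}_{C,O}(\tau)$ such that none of the nonnegativity inequalities $x_p\ge0$ ($p\in C$) and none of the chain inequalities holds with equality at every point of $F$ (i.e. $F$ is cut out by order inequalities only). Let $\varphi$ be the partition of $O$ associated with $F$ and $\pi=\varphi\cup\{\{c\}:c\in C\}$. Then $\pi$ is compatible, so the quotient poset $\hat P_\tau/\pi$ is defined; its minimum is $\{\hat0\}$ and its maximum is the block $T\in\varphi$ containing $\hat1$. Let $C_\pi=\{\{c\}:c\in C\}$, and let $\mathcal{O}_{C_\pi,\varphi}(\hat P_\tau/\pi)\subseteq\mathbb{R}^{\pi}$ be the set of $(x_B)_{B\in\pi}$ with $x_{\{\hat0\}}=0$, $x_T=1$, $x_B\ge 0$ for $B\in C_\pi$, $x_B\le x_{B'}$ for all $B,B'\in\varphi$ with $B$ covered by $B'$ in $\hat P_\tau/\pi$, and $x_{B_1}+\dots+x_{B_r}\le x_A$ for every saturated chain $\{\hat0\}\prec B_1\prec\dots\prec B_r\prec A$ in $\hat P_\tau/\pi$ with $B_1,\dots,B_r\in C_\pi$, $A\in\varphi$, $r\ge0$. Then the map $$\mathcal{O}_{C_\pi,\varphi}(\hat P_\tau/\pi)\to F,\quad (x_B)_{B\in\pi}\mapsto (x_{q(p)})_{p\in\hat P_\tau}$$ is an affine isomorphism, where $q:\hat P_\tau\to\hat P_\tau/\pi$ sends $p$ to its block. In particular the codimension of $F$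 equals $|O|-|\varphi|$.
   Context: Let $\tau=(\tau_1,\dots,\tau_\ell)$ be positive integers, $|\tau|=\sum_i\tau_i$. The poset $P_\tau$ has elements $y^i_j$ ($1\le i\le\ell$, $1\le j\le\tau_i$) with $y^i_j<y^{i'}_{j'}$ iff $i<i'$; $Y^i=\{y^i_1,\dots,y^i_{\tau_i}\}$. $\hat P_\tau=P_\tau\cup\{\hat0,\hat1\}$ with new minimum $\hat0$ and maximum $\hat1$, $Y^0=\{\hat0\}$, $Y^{\ell+1}=\{\hat1\}$; $\prec$ is the covering relation. The $k$-decomposition is $C=Y^0\cup\dots\cup Y^k$, $O=Y^{k+1}\cup\dots\cup Y^{\ell+1}$. The chain-order polytope $\mathcal{O}_{C,O}(\tau)\subseteq\mathbb{R}^{\hat P_\tau}$ consists of all $x$ with $x_{\hat0}=0$, $x_{\hat1}=1$, $x_p\ge0$ for $p\in C$ (nonnegativity inequalities), $x_a\le x_b$ for $a,b\in O$ with $a\prec b$ (order inequalities), and $x_{p_1}+\dots+x_{p_k}\le x_q$ for all $p_i\in Y^i$ ($1\le i\le k$), $q\in Y^{k+1}$ (chain inequalities). Codimension of a face $F$ is $|\tau|-\dim F$. The partition $\varphi$ of $O$ associated with $F$ has as blocks the connected components of the graph with vertex set $O$ and edges $\{a,b\}$ for all $a\prec b$ in $O$ with $x_a=x_b$ for every $x\in F$. A partition $\pi$ of $\hat P_\tau$ is compatible if the transitive closure of the relation ''$B\le B'$ iff $p\le q$ for some $p\in B$, $q\in B'$'' on blocks is antisymmetric; it is then a partial order, and $\hat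 P_\tau/\pi$ denotes the set of blocks with this order (the quotient poset). *)

(* Defs.v *)
From HB Require Import structures.
From mathcomp Require Import all_boot all_order all_algebra.
From Stdlib Require Import Relations.
Set Implicit Arguments. Unset Strict Implicit. Unset Printing Implicit Defensive.
Import Order.TTheory GRing.Theory Num.Theory.

Section Poset.
Variable tau : seq nat.

(* size of level Y^i of \hat P_tau, i = 0 .. size tau + 1 *)
Definition lv (i : nat) : nat :=
  if i == 0 then 1 else if i <= size tau then nth 0 tau i.-1
  else if i == (size tau).+1 then 1 else 0.

Definition bnd : nat := (\max_(t <- tau) t).+1.

(* element y^i_j  is encoded as (i, j-1) with j-1 < |Y^i| *)
Definition Pt : finType := {p : 'I_(size tau).+2 * 'I_bnd | p.2 < lv p.1}.

Definition lvl (p : Pt) : nat := (sval p).1.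

Lemma lv_first : lv 0 = 1. Proof. by []. Qed.
Lemma lv_last : lv (size tau).+1 = 1.
Proof. by rewrite /lv /= ltnn eqxx. Qed.

Lemma hat0_ok : 0 < lv (@ord0 (size tau).+1). Proof. by []. Qed.
Lemma hat1_ok : 0 < lv (@ord_max (size tau).+1). Proof. by rewrite /= lv_last. Qed.
Definition hat0 : Pt := exist (fun p : 'I_(size tau).+2 * 'I_bnd => p.2 < lv p.1)
  (ord0, Ordinal (ltn0Sn _)) hat0_ok.
Definition hat1 : Pt := exist (fun p : 'I_(size tau).+2 * 'I_bnd => p.2 < lv p.1)
  (ord_max, Ordinal (ltn0Sn _)) hat1_ok.

Definition ple (p q : Pt) : bool := (p == q) || (lvl p < lvl q).
Definition pcov (p q : Pt) : bool := lvl q == (lvl p).+1.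

Definition Cset (k : nat) : {set Pt} := [set p | lvl p <= k].
Definition Oset (k : nat) : {set Pt} := [set p | k < lvl p].
End Poset.

Local Open Scope ring_scope.

Definition chain_poly (R : realFieldType) (tau : seq nat) (k : nat)
  (x : Pt tau -> R) : Prop :=
  [/\ x (hat0 tau) = 0, x (hat1 tau) = 1,
      (forall p, p \in Cset tau k -> 0 <= x p),
      (forall a b, a \in Oset tau k -> b \in Oset tau k -> pcov a b -> x a <= x b) &
      (forall (ps : 'I_k -> Pt tau) (q : Pt tau),
          (forall i : 'I_k, lvl (ps i) = i.+1) -> lvl q = k.+1 ->
          \sum_(i < k) x (ps i) <= x q)].

Section Generic.
Variables (R : realFieldType) (T : finType).

Definition is_face (P F : (T -> R) -> Prop) : Prop :=
  exists (c : T -> R) (d : R),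
    (forall x, P x -> \sum_p c p * x p <= d) /\
    (forall x, F x <-> P x /\ \sum_p c p * x p = d).

Definition affdim_ge (S : (T -> R) -> Prop) (d : nat) : Prop :=
  exists x0, S x0 /\ exists ys : 'I_d -> T -> R, (forall i, S (ys i)) /\
    row_free (\matrix_(i < d, j < #|T|) (ys i (enum_val j) - x0 (enum_val j))).

Definition affdim (S : (T -> R) -> Prop) (d : nat) : Prop :=
  affdim_ge S d /\ ~ affdim_ge S d.+1.

Definition face_edge (F : (T -> R) -> Prop) (O : {set T}) (cov : rel T) (a b : T) : Prop :=
  [/\ a \in O, b \in O, (cov a b \/ cov b a) & forall x, F x -> x a = x b].

Definition is_assoc_partition (F : (T -> R) -> Prop) (O : {set T}) (cov : rel T)
  (phi : {set {set T}}) : Prop :=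
  forall B, B \in phi <-> exists2 a, a \in O &
     forall b, b \in B <-> (b \in O /\ clos_refl_trans T (face_edge F O cov) a b).
End Generic.

Section Quotient.
Variable T : finType.
Variable le : rel T.
Variable pi : {set {set T}}.

Definition blk_le (B B' : {set T}) : bool := [exists p in B, exists q in B', le p q].
Definition qrel (B B' : {set T}) : Prop := [/\ B \in pi, B' \in pi & blk_le B B'].
Definition qle : {set T} -> {set T} -> Prop := clos_trans _ qrel.
Definition compatible : Prop := forall B B', qle B B' -> qle B' B -> B = B'.
Definition qlt (B B' : {set T}) : Prop := qle B B' /\ B <> B'.
Definition qcov (B B' : {set T}) : Prop :=
  qlt B B' /\ ~ (exists D, qlt B D /\ qlt D B').

Fixpoint satchain (a : {set T}) (s : seq {set T}) (A : {set T}) : Prop :=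
  match s with
  | [::] => qcov a A
  | b :: s' => qcov a b /\ satchain b s' A
  end.

(* the polytope O_{C_pi, phi}(\hat P / pi); coordinates off pi are irrelevant *)
Definition quot_poly (R : realFieldType) (Cpi phi : {set {set T}}) (bot top : {set T})
  (y : {set T} -> R) : Prop :=
  [/\ y bot = 0, y top = 1,
      (forall B, B \in Cpi -> 0 <= y B),
      (forall B B', B \in phi -> B' \in phi -> qcov B B' -> y B <= y B') &
      (forall (s : seq {set T}) (A : {set T}), all (fun B => B \in Cpi) s ->
          A \in phi -> satchain bot s A -> \sum_(B <- s) y B <= y A)].
End Quotient.

(* Main.v *)
Require Import Defs.
From HB Require Import structures.
From mathcomp Require Import all_boot all_order all_algebra.
From mathcomp Require Import ring lra zify.
From Stdlib Require Import Relations Classical ClassicalEpsilon FunctionalExtensionality.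
Set Implicit Arguments. Unset Strict Implicit. Unset Printing Implicit Defensive.
Import Order.TTheory GRing.Theory Num.Theory.

Section GenFace.
Local Open Scope ring_scope.
Variables (R : realFieldType) (T I : finType) (t0 t1 : T) (valid : pred I)
  (form : I -> (T -> R) -> R).
Hypothesis form_lin : forall i a b x y,
  form i (fun t => a * x t + b * y t) = a * form i x + b * form i y.
Definition Pf (x : T -> R) : Prop :=
  [/\ x t0 = 0, x t1 = 1 & forall i, valid i -> 0 <= form i x].
Lemma PfP x : Pf x -> [/\ x t0 = 0, x t1 = 1 & forall i, valid i -> 0 <= form i x].
Proof. by []. Qed.
Variables (F : (T -> R) -> Prop) (c : T -> R) (d : R).
Hypothesis hval : forall x, Pf x -> \sum_p c p * x p <= d.
Hypothesis hF : forall x, F x <-> Pf x /\ \sum_p c p * x p = d.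
Hypothesis hne : exists x, F x.
Definition tight i := forall x, F x -> form i x = 0.

Lemma sum_lin a b x y : \sum_p c p * (a * x p + b * y p) =
  a * (\sum_p c p * x p) + b * (\sum_p c p * y p).
Proof.
rewrite !mulr_sumr -big_split /=; apply: eq_bigr => p _.
by rewrite mulrDr !mulrA ![c p * _]mulrC.
Qed.

Lemma F_conv a b x y : 0 <= a -> 0 <= b -> a + b = 1 -> F x -> F y ->
  F (fun t => a * x t + b * y t).
Proof.
move=> a0 b0 ab /hF [/PfP [x0 x1 xf] xs] /hF [/PfP [y0 y1 yf] ys]; apply/hF; split.
  split; first by rewrite x0 y0 !mulr0 addr0.
    by rewrite x1 y1 !mulr1.
  move=> i vi; rewrite form_lin.
  by apply: addr_ge0; apply: mulr_ge0 => //; [apply: xf|apply: yf].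
by rewrite sum_lin xs ys -mulrDl ab mul1r.
Qed.

Lemma relint : exists z, F z /\ forall i, valid i -> ~ tight i -> 0 < form i z.
Proof.
suff [z [Fz Hz]] : exists z, F z /\ forall i, i \in enum I -> valid i -> ~ tight i -> 0 < form i z.
  by exists z; split => // i; apply: Hz; rewrite mem_enum.
elim: (enum I) => [|i s [z [Fz Hz]]].
  by case: hne => x Fx; exists x; split.
case: (classic (valid i /\ ~ tight i)) => [[vi nti]|H].
  have [x [Fx fx]] : exists x, F x /\ form i x <> 0.
    apply: NNPP => H; apply: nti => x Fx; apply: NNPP => H2; by apply: H; exists x.
  have Pz := proj1 (proj1 (hF z) Fz); have Px := proj1 (proj1 (hF x) Fx).
  case/PfP: Pz => _ _ zf; case/PfP: Px => _ _ xf.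
  have h2 : (0 : R) <= 2^-1 by rewrite invr_ge0.
  exists (fun t => 2^-1 * z t + 2^-1 * x t); split.
    by apply: F_conv => //; lra.
  move=> j; rewrite inE => /orP [/eqP -> _ _|js vj ntj]; rewrite form_lin.
    have := xf i vi; rewrite le_eqVlt eq_sym => /orP [/eqP //|xp].
    by apply: ltr_wpDl; [apply: mulr_ge0 => //; apply: zf|apply: mulr_gt0; rewrite ?invr_gt0].
  apply: ltr_wpDr; first by apply: mulr_ge0 => //; apply: xf.
  by apply: mulr_gt0; [rewrite invr_gt0|apply: Hz].
exists z; split => // j; rewrite inE => /orP [/eqP -> vj ntj|js]; last exact: Hz.
by exfalso; apply: H.
Qed.

Lemma perturb z v : F z -> (forall i, valid i -> ~ tight i -> 0 < form i z) ->
  v t0 = 0 -> v t1 = 0 -> (forall i, valid i -> tight i -> form i v = 0) ->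
  exists2 e, 0 < e & Pf (fun t => 1 * z t + e * v t).
Proof.
move=> Fz Hz v0 v1 vt.
have [/PfP [z0 z1 zf] _] := proj1 (hF z) Fz.
suff [e e0 He] : exists2 e, 0 < e & forall i, i \in enum I -> valid i -> 0 <= form i (fun t => 1 * z t + e * v t).
  exists e => //; split; first by rewrite z0 v0 !mulr0 addr0.
    by rewrite z1 v1 mulr0 addr0 mulr1.
  by move=> i; apply: He; rewrite mem_enum.
elim: (enum I) => [|i s [e e0 He]]; first by exists 1.
case: (classic (valid i /\ ~ tight i)) => [[vi nti]|H].
  set a := form i z; set f := form i v.
  have a0 : 0 < a := Hz i vi nti.
  have f1 : 0 < `|f| + 1 by rewrite ltr_wpDl.
  set e' := Num.min e (a / (`|f| + 1)).
  have e'0 : 0 < e' by rewrite lt_min e0 divr_gt0.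
  have e'e : e' <= e by rewrite ge_min lexx.
  have e'a : e' * (`|f| + 1) <= a.
    by rewrite -ler_pdivlMr // ge_min lexx orbT.
  exists e' => // j; rewrite inE => /orP [/eqP -> _|js vj]; rewrite form_lin mul1r.
    have : - `|f| <= f by rewrite lerNnormlW.
    rewrite -/a -/f => hf; nra.
  have := He j js vj; rewrite form_lin mul1r => h.
  have := zf j vj.
  case: (lerP 0 (form j v)) => hv hz; first by apply: addr_ge0 => //; apply: mulr_ge0 => //; exact: ltW.
  nra.
exists e => // j; rewrite inE => /orP [/eqP -> vj|]; last exact: He.
rewrite form_lin mul1r.
have ti : tight i by apply: NNPP => nt; apply: H; split.
by rewrite (ti z Fz) (vt i vj ti) mulr0 addr0.
Qed.

Lemma face_char x : Pf x -> (forall i, valid i -> tight i -> form i x = 0) -> F x.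
Proof.
move=> Px Ht; have [z [Fz Hz]] := relint.
have [/PfP [z0 z1 zf] zs] := proj1 (hF z) Fz.
case/PfP: (Px) => x0 x1 xf.
have hv : forall i, valid i -> tight i -> form i (fun t => 1 * z t + (-1) * x t) = 0.
  by move=> i vi ti; rewrite form_lin (ti z Fz) Ht // !mulr0 addr0.
have hv0 : 1 * z t0 + (-1) * x t0 = 0 by rewrite z0 x0 !mulr0 addr0.
have hv1 : 1 * z t1 + (-1) * x t1 = 0 by rewrite z1 x1 mulr1 mulN1r subrr.
have [e e0 Pe] := perturb (v := fun t => 1 * z t + (-1) * x t) Fz Hz hv0 hv1 hv.
have := hval Pe; rewrite sum_lin sum_lin zs mul1r.
have := hval Px => hx h.
apply/hF; split => //.
have : e * (d - \sum_p c p * x p) <= 0 by lra.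
rewrite pmulr_rle0 // => h2; lra.
Qed.
End GenFace.

Definition pb (P : Prop) : bool := if excluded_middle_informative P then true else false.
Lemma pbP (P : Prop) : reflect P (pb P).
Proof. by rewrite /pb; case: excluded_middle_informative => h; constructor. Qed.

Section Cov.
Variables (X : finType) (lt : X -> X -> Prop).
Hypothesis lt_tr : forall a b c, lt a b -> lt b c -> lt a c.
Hypothesis lt_irr : forall a, ~ lt a a.
Definition gcov a b := lt a b /\ ~ (exists c, lt a c /\ lt c b).

Lemma cov_ex a b : lt a b -> exists c, gcov a c /\ (c = b \/ lt c b).
Proof.
move=> ab.
move: {2}#|[set c | pb (lt a c /\ lt c b)]| (leqnn #|[set c | pb (lt a c /\ lt c b)]|) => n.
elim: n b ab => [|n IH] b ab hn.
  exists b; split; last by left.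
  split => // -[c hc]; move: hn; rewrite leqn0 cards_eq0 => /eqP/setP/(_ c).
  by rewrite !inE; case: pbP.
case: (classic (exists c, lt a c /\ lt c b)) => [[c [ac cb]]|H]; last first.
  by exists b; split => //; left.
have hc : (#|[set c0 | pb (lt a c0 /\ lt c0 c)]| <= n)%N.
  rewrite -ltnS; apply: leq_trans hn; apply: proper_card; apply/properP; split.
    by apply/subsetP => x; rewrite !inE => /pbP [ax xc]; apply/pbP; split => //; exact: lt_tr xc cb.
  by exists c; rewrite !inE; [apply/pbP | case: pbP => // -[_ /lt_irr]].
have [c' [cc' o]] := IH c ac hc.
by exists c'; split => //; right; case: o => [->//|h]; exact: lt_tr h cb.
Qed.

Lemma cov_ind (S : X -> Prop) (Rl : X -> X -> Prop) :
  (forall a b, S a -> lt a b -> S b) ->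
  (forall a b c, Rl a b -> Rl b c -> Rl a c) ->
  (forall a b, S a -> gcov a b -> Rl a b) ->
  forall a b, S a -> lt a b -> Rl a b.
Proof.
move=> Sup Rtr Rcov a.
move: {2}#|[set c | pb (lt a c)]| (leqnn #|[set c | pb (lt a c)]|) => n.
elim: n a => [|n IH] a hn b Sa ab.
  by move: hn; rewrite leqn0 cards_eq0 => /eqP/setP/(_ b); rewrite !inE; case: pbP.
have [c [ac [<-|cb]]] := cov_ex ab; first exact: Rcov.
have hc : (#|[set c0 | pb (lt c c0)]| <= n)%N.
  rewrite -ltnS; apply: leq_trans hn; apply: proper_card; apply/properP; split.
    by apply/subsetP => x; rewrite !inE => /pbP cx; apply/pbP; exact: lt_tr (proj1 ac) cx.
  by exists c; rewrite !inE; [apply/pbP; exact: (proj1 ac) | case: pbP => // /lt_irr].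
exact: Rtr (Rcov _ _ Sa ac) (IH c hc b (Sup _ _ Sa (proj1 ac)) cb).
Qed.
End Cov.

Section Basic.
Variable tau : seq nat.
Hypothesis htau : all (fun t => 0 < t)%N tau.
Local Notation PT := (Pt tau).

Lemma lvl_le (p : PT) : (lvl p <= (size tau).+1)%N.
Proof. by rewrite /lvl -ltnS; case: (sval p).1. Qed.

Lemma lvl_hat0 : lvl (hat0 tau) = 0%N. Proof. by []. Qed.
Lemma lvl_hat1 : lvl (hat1 tau) = (size tau).+1. Proof. by []. Qed.

Lemma lvl0 (p : PT) : lvl p = 0%N -> p = hat0 tau.
Proof.
case: p => [[i j] /= H] /= hi; apply: val_inj => /=.
have hi' : i = ord0 by apply: val_inj.
clear hi.
subst i; congr pair; apply: val_inj => /=; move: H; rewrite /lv /=; case: (nat_of_ord j) => //.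
Qed.

Lemma lvlmax (p : PT) : lvl p = (size tau).+1 -> p = hat1 tau.
Proof.
case: p => [[i j] /= H] /= hi; apply: val_inj => /=.
have hi' : i = ord_max by apply: val_inj.
clear hi.
subst i; congr pair; apply: val_inj => /=; move: H; rewrite lv_last; case: (nat_of_ord j) => //.
Qed.

Lemma lv_pos i : (i <= (size tau).+1)%N -> (0 < lv tau i)%N.
Proof.
rewrite /lv; case: eqP => // /eqP i0 hi; case: ifP => [his|his]; last first.
  have -> : i == (size tau).+1 by rewrite eqn_leq hi ltnNge his.
  by [].
move/all_nthP: htau => /(_ 0%N i.-1); apply; rewrite prednK ?lt0n //.
Qed.

Lemma lv_bnd i : (lv tau i <= bnd tau)%N.
Proof.
rewrite /bnd /lv; case: eqP => [//|/eqP i0].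
case: ifP => [his|_]; last by case: ifP.
apply: leq_trans (leqnSn _); apply: leq_bigmax_seq => //; apply: mem_nth.
by case: i i0 his => //= i _; rewrite ltnS.
Qed.

Lemma ex_lvl i : (i <= (size tau).+1)%N -> exists p : PT, lvl p = i.
Proof.
move=> hi.
have h0 : (0 < bnd tau)%N by rewrite /bnd.
have h1 : (i < (size tau).+2)%N by [].
exists (exist (fun p : 'I_(size tau).+2 * 'I_(bnd tau) => (p.2 < lv tau p.1)%N)
  (Ordinal h1, Ordinal h0) (lv_pos hi)).
by [].
Qed.
Lemma sum_ltm (b m : nat) : (\sum_(j < b) (j < m : nat))%N = minn m b.
Proof.
elim: b => [|b IH]; first by rewrite big_ord0 minn0.
rewrite big_ord_recr /= IH; case: (ltnP b m) => h /=; lia.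
Qed.

Lemma card_PT : #|{: PT}| = (sumn tau).+2.
Proof.
rewrite card_sig -sum1_card big_mkcond /=.
rewrite -(pair_bigA _ (fun (i : 'I_(size tau).+2) (j : 'I_(bnd tau)) => if (j < lv tau i)%N then 1%N else 0%N)) /=.
rewrite (eq_bigr (fun i : 'I_(size tau).+2 => lv tau i)); last first.
  move=> i _; rewrite (eq_bigr (fun j : 'I_(bnd tau) => (j < lv tau i : nat))).
    by rewrite sum_ltm; apply/minn_idPl; apply: lv_bnd.
  by move=> j _; case: ifP.
rewrite big_ord_recl big_ord_recr /= lv_first lv_last.
rewrite (eq_bigr (fun i : 'I_(size tau) => nth 0%N tau i)); last first.
  by move=> i _; rewrite /lv /= /bump /= add1n add0n ltn_ord.
by rewrite sumnE (big_nth 0%N) big_mkord add1n addn1.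
Qed.
End Basic.

Section Main.
Local Open Scope ring_scope.
Variables (R : realFieldType) (tau : seq nat) (k : nat)
  (F : (Pt tau -> R) -> Prop) (phi : {set {set Pt tau}}).
Local Notation PT := (Pt tau).
Local Notation C := (Cset tau k).
Local Notation O := (Oset tau k).
Hypothesis htau : all (fun t => 0 < t)%N tau.
Hypothesis hk : (k <= size tau)%N.
Hypothesis hface : is_face (@chain_poly R tau k) F.
Hypothesis hne : exists x, F x.
Hypothesis hC : forall p, p \in Cset tau k -> p != hat0 tau -> ~ (forall x, F x -> x p = 0).
Hypothesis hch : forall (ps : 'I_k -> Pt tau) (q : Pt tau),
      (forall i : 'I_k, lvl (ps i) = i.+1) -> lvl q = k.+1 ->
      ~ (forall x, F x -> \sum_(i < k) x (ps i) = x q).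
Hypothesis hphi : is_assoc_partition F (Oset tau k) (@pcov tau) phi.

Definition Ity := ((PT + (PT * PT)) + ({ffun 'I_k -> PT} * PT))%type.
Definition valid (i : Ity) : bool :=
  match i with
  | inl (inl p) => p \in C
  | inl (inr (a, b)) => [&& a \in O, b \in O & pcov a b]
  | inr (f, q) => [forall j, lvl (f j) == j.+1] && (lvl q == k.+1)
  end.
Definition form (i : Ity) (x : PT -> R) : R :=
  match i with
  | inl (inl p) => x p
  | inl (inr (a, b)) => x b - x a
  | inr (f, q) => x q - \sum_(j < k) x (f j)
  end.

Lemma form_lin i a b x y :
  form i (fun t => a * x t + b * y t) = a * form i x + b * form i y.
Proof.
case: i => [[p|[u v]]|[f q]] /=; try ring.
rewrite big_split /= -!mulr_sumr; ring.
Qed.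

Lemma inC p : (p \in C) = (lvl p <= k)%N. Proof. by rewrite inE. Qed.
Lemma inO p : (p \in O) = (k < lvl p)%N. Proof. by rewrite inE. Qed.

Lemma chainP x : chain_poly k x <-> Pf (hat0 tau) (hat1 tau) valid form x.
Proof.
split.
  case=> x0 x1 xc xo xch; split => // -[[p|[u v]]|[f q]] /=.
  - exact: xc.
  - by case/and3P => uO vO uv; rewrite subr_ge0; apply: xo.
  - case/andP => /forallP hf /eqP hq; rewrite subr_ge0; apply: xch => // j.
    exact/eqP.
case=> x0 x1 hv; split => //.
- by move=> p pC; apply: (hv (inl (inl p))).
- by move=> a b aO bO ab; have := hv (inl (inr (a, b))); rewrite /= aO bO ab subr_ge0; apply.
- move=> ps q hps hq.
  have := hv (inr ([ffun j => ps j], q)); rewrite /= hq eqxx andbT subr_ge0.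
  rewrite (eq_bigr (fun j => x (ps j))); last by move=> j _; rewrite ffunE.
  apply; apply/forallP => j; rewrite ffunE hps //.
Qed.

Definition tightc i := forall x, F x -> form i x = 0.

Lemma faceF : exists c d,
  (forall x, Pf (hat0 tau) (hat1 tau) valid form x -> \sum_p c p * x p <= d) /\
  (forall x, F x <-> Pf (hat0 tau) (hat1 tau) valid form x /\ \sum_p c p * x p = d).
Proof.
case: hface => c [d [h1 h2]]; exists c, d; split.
  by move=> x /chainP; apply: h1.
by move=> x; rewrite h2 chainP.
Qed.

Lemma FP x : F x -> chain_poly k x.
Proof. by have [c [d [_ h]]] := faceF; move/h => [/chainP]. Qed.

Lemma relint_m : exists z, F z /\ forall i, valid i -> ~ tightc i -> 0 < form i z.
Proof.
have [c [d [h1 h2]]] := faceF.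
have [z [Fz Hz]] := relint form_lin h2 hne.
by exists z; split.
Qed.

Lemma face_char_m x : chain_poly k x -> (forall i, valid i -> tightc i -> form i x = 0) -> F x.
Proof. have [c [d [h1 h2]]] := faceF; move/chainP; exact: (face_char form_lin h1 h2 hne). Qed.

Lemma perturb_m z v : F z -> (forall i, valid i -> ~ tightc i -> 0 < form i z) ->
  v (hat0 tau) = 0 -> v (hat1 tau) = 0 -> (forall i, valid i -> tightc i -> form i v = 0) ->
  exists2 e, 0 < e & chain_poly k (fun t => 1 * z t + e * v t).
Proof.
have [c [d [h1 h2]]] := faceF => Fz Hz v0 v1 vt.
have [e e0 He] := perturb form_lin h2 Fz Hz v0 v1 vt.
by exists e => //; apply/chainP.
Qed.

Local Notation fe := (face_edge F O (@pcov tau)).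
Local Notation rt := (clos_refl_trans PT fe).

Lemma fe_sym a b : fe a b -> fe b a.
Proof. by case=> aO bO ab h; split => //; [case: ab; by [right|left] | move=> x /h ->]. Qed.

Lemma rt_sym a b : rt a b -> rt b a.
Proof.
elim=> [u v /fe_sym h|u|u v w _ h1 _ h2]; first exact: rt_step.
  exact: rt_refl.
exact: rt_trans h2 h1.
Qed.

Lemma rt_F x a b : rt a b -> F x -> x a = x b.
Proof.
move=> h Fx; elim: h => [u v [_ _ _ h]|u|u v w _ h1 _ h2]; [exact: h | by [] | by rewrite h1].
Qed.

Lemma rt_O a b : rt a b -> a \in O -> b \in O.
Proof. by elim=> [u v [_ h _ _]|u|u v w _ h1 _ h2] // /h1 /h2. Qed.

Lemma phi_sub B b : B \in phi -> b \in B -> b \in O.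
Proof. by move/hphi => [a aO h] /h []. Qed.

Lemma phi_rt B a b : B \in phi -> a \in B -> b \in B -> rt a b.
Proof.
move/hphi => [a0 aO h] /h [_ h1] /h [_ h2].
exact: rt_trans (rt_sym h1) h2.
Qed.

Lemma phi_cl B a b : B \in phi -> a \in B -> rt a b -> b \in B.
Proof.
move=> Bp aB ab; have [/(_ Bp) [a1 a1O h1] _] := hphi B.
apply/h1; move/h1: aB => [aO' h2].
split; [exact: rt_O ab aO' | exact: rt_trans h2 ab].
Qed.

Definition cls a := [set b | pb (b \in O /\ rt a b)].

Lemma phi_ex a : a \in O -> cls a \in phi /\ a \in cls a.
Proof.
move=> aO; split; last by rewrite inE; apply/pbP; split => //; exact: rt_refl.
apply/hphi; exists a => // b; rewrite inE; split; by move/pbP.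
Qed.

Lemma phi_eq B1 B2 p : B1 \in phi -> B2 \in phi -> p \in B1 -> p \in B2 -> B1 = B2.
Proof.
move=> h1 h2 p1 p2; apply/setP => b; apply/idP/idP => hb.
  exact: phi_cl h2 p2 (phi_rt h1 p1 hb).
exact: phi_cl h1 p1 (phi_rt h2 p2 hb).
Qed.

Lemma CO p : p \in C -> p \in O -> False.
Proof. by rewrite inC inO => h1 h2; move: (leq_ltn_trans h1 h2); rewrite ltnn. Qed.

Definition Cpi := [set [set c] | c in C].
Definition pi := phi :|: Cpi.
Definition Tb := pblock phi (hat1 tau).

Lemma CpiP B : B \in Cpi -> exists2 c, c \in C & B = [set c].
Proof. by case/imsetP => c cC ->; exists c. Qed.

Lemma phi_Cpi B : B \in phi -> B \in Cpi -> False.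
Proof. by move=> Bp /CpiP [c cC BE]; apply: (CO cC); apply: phi_sub Bp _; rewrite BE set11. Qed.

Lemma piP B : B \in pi -> B \in phi \/ B \in Cpi.
Proof. by rewrite inE => /orP. Qed.

Lemma pi_eq B1 B2 p : B1 \in pi -> B2 \in pi -> p \in B1 -> p \in B2 -> B1 = B2.
Proof.
move=> /piP [h1|/CpiP [c1 c1C E1]] /piP [h2|/CpiP [c2 c2C E2]].
- exact: phi_eq.
- by move=> pB; rewrite E2 inE => /eqP pc; exfalso; apply: (CO c2C); rewrite -pc; apply: phi_sub h1 pB.
- by rewrite E1 inE => /eqP pc pB; exfalso; apply: (CO c1C); rewrite -pc; apply: phi_sub h2 pB.
- by rewrite E1 E2 !inE => /eqP -> /eqP ->.
Qed.

Lemma pi_ex p : exists2 B, B \in pi & p \in B.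
Proof.
case: (leqP (lvl p) k) => h.
  by exists [set p]; rewrite ?set11 // inE; apply/orP; right; apply/imsetP; exists p; rewrite ?inC.
have pO : p \in O by rewrite inO.
by have [h1 h2] := phi_ex pO; exists (cls p) => //; rewrite inE h1.
Qed.

Lemma pblock_eq (P : {set {set PT}}) B p :
  (forall B1 B2, B1 \in P -> B2 \in P -> p \in B1 -> p \in B2 -> B1 = B2) ->
  B \in P -> p \in B -> pblock P p = B.
Proof.
move=> huniq BP pB; rewrite /pblock; case: pickP => [B' /andP [h1 h2]|/(_ B)].
  by apply: huniq.
by rewrite /= BP pB.
Qed.

Lemma pblock_pi B p : B \in pi -> p \in B -> pblock pi p = B.
Proof. by move=> BP pB; apply: pblock_eq => // B1 B2; apply: pi_eq. Qed.

Lemma pblock_mem p : pblock pi p \in pi /\ p \in pblock pi p.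
Proof. by have [B BP pB] := pi_ex p; rewrite (pblock_pi BP pB). Qed.

Lemma hat1O : hat1 tau \in O.
Proof. by rewrite inO lvl_hat1 ltnS. Qed.
Lemma hat0C : hat0 tau \in C.
Proof. by rewrite inC lvl_hat0. Qed.

Lemma Tb_prop : [/\ Tb \in phi, hat1 tau \in Tb & Tb \in pi].
Proof.
have [h1 h2] := phi_ex hat1O.
have -> : Tb = cls (hat1 tau) by apply: pblock_eq => // B1 B2; apply: phi_eq.
by split => //; rewrite inE h1.
Qed.

Lemma pblock_hat1 : pblock pi (hat1 tau) = Tb.
Proof. by case: Tb_prop => _ h1 h2; apply: pblock_pi. Qed.

Lemma hat0_pi : [set hat0 tau] \in pi.
Proof. by rewrite inE; apply/orP; right; apply/imsetP; exists (hat0 tau); rewrite ?hat0C. Qed.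

Lemma pblock_hat0 : pblock pi (hat0 tau) = [set hat0 tau].
Proof. by apply: pblock_pi; rewrite ?set11 ?hat0_pi. Qed.

Definition rep (B : {set PT}) : PT := odflt (hat0 tau) [pick p in B].

Lemma rep_in (B : {set PT}) p : p \in B -> rep B \in B.
Proof. by rewrite /rep; case: pickP => [q //|/(_ p) ->]. Qed.

Lemma rep1 c : rep [set c] = c.
Proof. by rewrite /rep; case: pickP => [q|/(_ c)]; rewrite inE ?eqxx // => /eqP. Qed.

Lemma rep_pi B : B \in pi -> rep B \in B.
Proof.
case/piP => [Bp|/CpiP [c _ ->]]; last by rewrite rep1 set11.
by have [/(_ Bp) [a1 a1O h1] _] := hphi B; apply: (rep_in (p := a1)); apply/h1; split => //; exact: rt_refl.
Qed.

Lemma pblock_rep B : B \in pi -> pblock pi (rep B) = B.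
Proof. by move=> BP; apply: pblock_pi => //; apply: rep_pi. Qed.

Lemma F_const x B a b : F x -> B \in pi -> a \in B -> b \in B -> x a = x b.
Proof.
move=> Fx /piP [Bp aB bB|/CpiP [c _ ->]]; first exact: rt_F (phi_rt Bp aB bB) Fx.
by rewrite !inE => /eqP -> /eqP ->.
Qed.

Lemma F_rep x p : F x -> x p = x (rep (pblock pi p)).
Proof.
move=> Fx; have [h1 h2] := pblock_mem p.
exact: F_const Fx h1 h2 (rep_pi h1).
Qed.

Lemma ple_trans (a b c : PT) : ple a b -> ple b c -> ple a c.
Proof.
rewrite /ple => /orP [/eqP ->|ab] // /orP [/eqP <-|bc]; first by rewrite ab orbT.
by rewrite (ltn_trans ab bc) orbT.
Qed.

Lemma ple_O a b : a \in O -> ple a b -> b \in O.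
Proof. by rewrite /ple !inO => aO /orP [/eqP <-|h] //; exact: ltn_trans aO h. Qed.

Lemma ple_C a b : b \in C -> ple a b -> a \in C.
Proof. by rewrite /ple !inC => bC /orP [/eqP ->|h] //; exact: leq_trans (ltnW h) bC. Qed.

Lemma lvl_step (P : PT -> PT -> Prop) :
  (forall a b, a \in O -> pcov a b -> P a b) ->
  (forall a m b, a \in O -> P a m -> P m b -> P a b) ->
  forall a b, a \in O -> (lvl a < lvl b)%N -> P a b.
Proof.
move=> Pcov Ptr a b aO ab.
have [n hn] : exists n, lvl b = (lvl a + n.+1)%N by exists (lvl b - lvl a).-1; lia.
elim: n b hn {ab} => [|n IH] b hb; first by apply: Pcov => //; rewrite /pcov hb addn1.
have hle : (lvl a + n.+1 <= (size tau).+1)%N by have := lvl_le b; lia.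
have [m hm] := ex_lvl htau hle.
apply: Ptr (IH m hm) _ => //.
by apply: Pcov; [rewrite inO hm; move: aO; rewrite inO; lia | rewrite /pcov hm hb; apply/eqP; lia].
Qed.

Lemma mono_F x a b : F x -> a \in O -> ple a b -> x a <= x b.
Proof.
move=> Fx aO /orP [/eqP <-//|ab].
have [_ _ _ xo _] := FP Fx.
apply: (lvl_step (P := fun a b => x a <= x b)) => //.
  by move=> u v uO uv; apply: xo => //; rewrite inO (eqP uv); move: uO; rewrite inO; lia.
by move=> u m v _ h1 h2; exact: le_trans h1 h2.
Qed.

Section Z.
Variable z : PT -> R.
Hypothesis Fz : F z.
Hypothesis Hz : forall i, valid i -> ~ tightc i -> 0 < form i z.

Lemma z_step a b : a \in O -> (lvl a < lvl b)%N -> z a <= z b /\ (z a = z b -> rt a b).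
Proof.
move: a b; apply: (lvl_step (P := fun a b => z a <= z b /\ (z a = z b -> rt a b))).
  move=> u v uO uv; have vO : v \in O by rewrite inO (eqP uv); move: uO; rewrite inO; lia.
  have vi : valid (inl (inr (u, v))) by rewrite /= uO vO uv.
  have [_ _ _ zo _] := FP Fz; split; first exact: zo.
  move=> e; apply: rt_step; split => //; first by left.
  have ti : tightc (inl (inr (u, v))).
    by apply: NNPP => nt; have := Hz vi nt; rewrite /= e subrr ltxx.
  by move=> x /ti /= /eqP; rewrite subr_eq0 eq_sym => /eqP.
move=> u m v _ [h1 h2] [h3 h4]; split; first exact: le_trans h1 h3.
move=> e; have e1 : z u = z m by apply/eqP; rewrite eq_le h1 e h3.
by apply: rt_trans (h2 e1) (h4 _); rewrite -e1.
Qed.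

Lemma z_lt a b : a \in O -> ple a b -> pblock pi a != pblock pi b -> z a < z b.
Proof.
move=> aO /orP [/eqP <-|ab]; first by rewrite eqxx.
have [h1 h2] := z_step aO ab => hne'; rewrite lt_neqAle h1 andbT; apply/eqP => e.
move/eqP: hne'; apply; have [B1 [Bp aB]] : exists B1, B1 \in phi /\ a \in B1 by have [h3 h4] := phi_ex aO; exists (cls a).
have BP : B1 \in pi by rewrite inE Bp.
by rewrite (pblock_pi BP aB) (pblock_pi BP (phi_cl Bp aB (h2 e))).
Qed.

Local Notation qle := (qle (@ple tau) pi).
Local Notation qrel := (qrel (@ple tau) pi).
Local Notation qlt := (qlt (@ple tau) pi).
Local Notation qcov := (qcov (@ple tau) pi).

Lemma qrelP B B' : qrel B B' -> [/\ B \in pi, B' \in pi & exists p q, [/\ p \in B, q \in B' & ple p q]].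
Proof.
case=> h1 h2 /existsP [p /andP [pB /existsP [q /andP [qB pq]]]]; split => //.
by exists p, q.
Qed.

Lemma qrelI B B' p q : B \in pi -> B' \in pi -> p \in B -> q \in B' -> ple p q -> qrel B B'.
Proof.
move=> h1 h2 pB qB pq; split => //; apply/existsP; exists p; rewrite pB /=.
by apply/existsP; exists q; rewrite qB.
Qed.

Lemma qle_pi B B' : qle B B' -> B \in pi /\ B' \in pi.
Proof.
elim=> [u v /qrelP [h1 h2 _]|u v w _ [h1 _] _ [_ h2]] //.
Qed.

Lemma up_phi B B' : qle B B' -> B \in phi -> B' \in phi.
Proof.
elim=> [u v /qrelP [h1 h2 [p [q [pu qv pq]]]] up|u v w _ h1 _ h2 /h1 /h2] //.
case/piP: h2 => // /CpiP [c cC E]; exfalso; apply: (CO cC).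
by move: qv; rewrite E inE => /eqP <-; exact: ple_O (phi_sub up pu) pq.
Qed.

Lemma Cpi_pi B : B \in Cpi -> B \in pi.
Proof. by move=> h; rewrite inE h orbT. Qed.
Lemma phi_pi B : B \in phi -> B \in pi.
Proof. by move=> h; rewrite inE h. Qed.

Lemma C_qle B B' : qle B B' -> B \in Cpi -> B' \in Cpi -> ple (rep B) (rep B').
Proof.
elim=> [u v /qrelP [h1 h2 [p [q [pu qv pq]]]]|u v w h1 IH1 h2 IH2] hu hv.
  move: hu hv pu qv => /CpiP [c _ ->] /CpiP [c' _ ->]; rewrite !rep1 !inE.
  by move=> /eqP <- /eqP <-.
have [_ vP] := qle_pi h1.
case/piP: vP => vC; last exact: ple_trans (IH1 hu vC) (IH2 vC hv).
by exfalso; apply: phi_Cpi hv; apply: up_phi h2 vC.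
Qed.

Definition strict (B B' : {set PT}) : Prop :=
  [\/ B \in Cpi /\ B' \in phi,
      [/\ B \in Cpi, B' \in Cpi & (lvl (rep B) < lvl (rep B'))%N] |
      [/\ B \in phi, B' \in phi & z (rep B) < z (rep B')]].

Lemma strict_tr a b c : strict a b -> strict b c -> strict a c.
Proof.
rewrite /strict; case=> [[aC bp]|[aC bC ab]|[ap bp ab]] [[bC' cp]|[bC' cC bc]|[bp' cp bc]].
all: try by exfalso; apply: (@phi_Cpi b).
- by apply: Or31; split.
- by apply: Or31; split.
- by apply: Or32; split => //; exact: ltn_trans ab bc.
- by apply: Or33; split => //; exact: lt_trans ab bc.
Qed.

Lemma strict_irr a : ~ strict a a.
Proof. by rewrite /strict; case=> [[h1 h2]|[_ _]|[_ _]]; rewrite ?ltnn ?ltxx //; apply: phi_Cpi h2 h1. Qed.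

Lemma qle_strict B B' : qle B B' -> B = B' \/ strict B B'.
Proof.
elim=> [u v h|u v w _ [->|h1] _ [<-|h2]]; [|by left|by right|by right|by right; apply: strict_tr h1 h2].
have [uP vP [p [q [pu qv pq]]]] := qrelP h.
case: (eqVneq u v) => [->|uv]; [by left | right].
case/piP: uP => [up|uC]; case/piP: vP => [vp|vC].
- apply: Or33; split => //.
  rewrite -(F_const Fz (phi_pi up) pu (rep_pi (phi_pi up))).
  rewrite -(F_const Fz (phi_pi vp) qv (rep_pi (phi_pi vp))).
  apply: z_lt (phi_sub up pu) pq _.
  by rewrite (pblock_pi (phi_pi up) pu) (pblock_pi (phi_pi vp) qv).
- by exfalso; move: vC => /CpiP [c cC E]; apply: (CO cC); move: qv; rewrite E inE => /eqP <-; exact: ple_O (phi_sub up pu) pq.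
- by apply: Or31; split.
- apply: Or32; split => //.
  move: uC vC pu qv uv pq => /CpiP [c _ ->] /CpiP [c' _ ->]; rewrite !rep1 !inE => /eqP -> /eqP ->.
  by rewrite /ple => cc' /orP [/eqP E|//]; rewrite E eqxx in cc'.
Qed.

Lemma compat : compatible (@ple tau) pi.
Proof.
move=> B B' h1 h2; case: (qle_strict h1) => // s1; case: (qle_strict h2) => [E|s2].
  by rewrite E.
by exfalso; apply: (strict_irr (strict_tr s1 s2)).
Qed.

Lemma qle_trans a b c : qle a b -> qle b c -> qle a c.
Proof. exact: t_trans. Qed.

Lemma qlt_tr a b c : qlt a b -> qlt b c -> qlt a c.
Proof.
move=> [h1 n1] [h2 n2]; split; first exact: qle_trans h1 h2.
by move=> E; subst c; apply: n1; apply: compat h1 h2.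
Qed.

Lemma qlt_irr a : ~ qlt a a.
Proof. by case. Qed.

Lemma qle_refl B : B \in pi -> qle B B.
Proof. by move=> BP; apply: t_step; apply: (qrelI BP BP (rep_pi BP) (rep_pi BP)); rewrite /ple eqxx. Qed.

Lemma sC c : c \in C -> [set c] \in Cpi.
Proof. by move=> cC; apply: imset_f. Qed.

Lemma qltC a b : a \in C -> b \in C -> qlt [set a] [set b] -> (lvl a < lvl b)%N.
Proof.
move=> aC bC [h ne]; have := C_qle h (sC aC) (sC bC); rewrite !rep1 /ple => /orP [/eqP E|//].
by rewrite E in ne.
Qed.

Lemma qltI a b : a \in C -> b \in C -> (lvl a < lvl b)%N -> qlt [set a] [set b].
Proof.
move=> aC bC ab; split.
  apply: t_step; apply: (qrelI (Cpi_pi (sC aC)) (Cpi_pi (sC bC)) (set11 a) (set11 b)).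
  by rewrite /ple ab orbT.
by move/setP/(_ b); rewrite !inE eqxx => /eqP E; rewrite E ltnn in ab.
Qed.

Lemma qltCO a A : a \in C -> A \in phi -> qlt [set a] A.
Proof.
move=> aC Ap; split.
  apply: t_step; apply: (qrelI (Cpi_pi (sC aC)) (phi_pi Ap) (set11 a) (rep_pi (phi_pi Ap))).
  have := phi_sub Ap (rep_pi (phi_pi Ap)); rewrite inO; move: aC; rewrite inC /ple => h1 h2.
  by rewrite (leq_ltn_trans h1 h2) orbT.
by move=> E; apply: (phi_Cpi Ap); rewrite -E sC.
Qed.


Lemma cov_CC a b : a \in C -> b \in C -> qcov [set a] [set b] -> lvl b = (lvl a).+1.
Proof.
move=> aC bC [h nD]; have ab := qltC aC bC h.
apply/eqP; rewrite eqn_leq ab andbT; rewrite leqNgt; apply/negP => h2.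
have [m hm] : exists m : PT, lvl m = (lvl a).+1 by apply: (ex_lvl htau); have := lvl_le b; lia.
have mC : m \in C by rewrite inC hm; move: bC; rewrite inC; lia.
apply: nD; exists [set m]; split; apply: qltI => //; rewrite hm //.
Qed.

Lemma cov_CO a A : a \in C -> A \in phi -> qcov [set a] A -> lvl a = k.
Proof.
move=> aC Ap [h nD]; apply/eqP; rewrite eqn_leq -inC aC /=; rewrite leqNgt; apply/negP => h2.
have [m hm] : exists m : PT, lvl m = (lvl a).+1 by apply: (ex_lvl htau); lia.
have mC : m \in C by rewrite inC hm.
apply: nD; exists [set m]; split; [apply: qltI => //; rewrite hm // | exact: qltCO].
Qed.

Lemma cov_CC_I a b : a \in C -> b \in C -> lvl b = (lvl a).+1 -> qcov [set a] [set b].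
Proof.
move=> aC bC hb; split; first by apply: qltI => //; rewrite hb.
case=> D [h1 h2]; have [_ DP] := qle_pi (proj1 h1).
case/piP: DP => [Dp|/CpiP [d dC E]].
  by apply: (phi_Cpi (up_phi (proj1 h2) Dp)); apply: sC.
subst D; have := qltC aC dC h1; have := qltC dC bC h2; lia.
Qed.

Lemma cov_top a Bq : a \in C -> lvl a = k -> Bq \in phi ->
  exists A, [/\ A \in phi, qcov [set a] A & qle A Bq].
Proof.
move=> aC la Bp; have [A [hc o]] := cov_ex qlt_tr qlt_irr (qltCO aC Bp).
have [_ AP] := qle_pi (proj1 (proj1 hc)).
case/piP: AP => [Ap|/CpiP [d dC E]].
  exists A; split => //; case: o => [->|[]//]; exact: qle_refl (phi_pi Bp).
subst A; have := qltC aC dC (proj1 hc); move: dC; rewrite inC la; lia.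
Qed.

Lemma qmono (y : {set PT} -> R) :
  (forall B B', B \in phi -> B' \in phi -> qcov B B' -> y B <= y B') ->
  forall B B', B \in phi -> qle B B' -> y B <= y B'.
Proof.
move=> hy B B' Bp h; case: (eqVneq B B') => [->//|ne].
apply: (cov_ind qlt_tr qlt_irr (S := fun B => B \in phi) (Rl := fun B B' => y B <= y B')) Bp _.
- by move=> a b ap [ab _]; apply: up_phi ab ap.
- by move=> a b c; apply: le_trans.
- by move=> a b ap hab; apply: hy => //; apply: up_phi (proj1 (proj1 hab)) ap.
- by split => // E; rewrite E eqxx in ne.
Qed.

Lemma qle_F x B B' : F x -> B \in phi -> qle B B' -> x (rep B) <= x (rep B').
Proof.
move=> Fx Bp h; elim: h Bp => [u v /qrelP [uP vP [p [q [pu qv pq]]]] up|u v w h1 IH1 h2 IH2 up].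
  rewrite -(F_const Fx uP pu (rep_pi uP)) -(F_const Fx vP qv (rep_pi vP)).
  exact: mono_F Fx (phi_sub up pu) pq.
exact: le_trans (IH1 up) (IH2 (up_phi h1 up)).
Qed.
Local Notation Q := (quot_poly (@ple tau) pi Cpi phi [set hat0 tau] Tb).

Lemma chain_seq (x : PT -> R) (cs : seq PT) q : chain_poly k x -> size cs = k ->
  (forall i, (i < k)%N -> lvl (nth (hat0 tau) cs i) = i.+1) -> lvl q = k.+1 ->
  \sum_(c <- cs) x c <= x q.
Proof.
case=> _ _ _ _ xch hs hl hq.
have := xch (fun i : 'I_k => nth (hat0 tau) cs i) q (fun i => hl i (ltn_ord i)) hq.
by rewrite (big_nth (hat0 tau)) hs big_mkord.
Qed.

Lemma satchain_lv A s a : a \in C -> all (fun B => B \in Cpi) s -> A \in phi ->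
  satchain (@ple tau) pi [set a] s A ->
  (size s + lvl a = k)%N /\ forall i, (i < size s)%N -> lvl (nth (hat0 tau) (map rep s) i) = (lvl a + i.+1)%N.
Proof.
move=> + + Ap; elim: s a => [|B s IH] a aC /=.
  by move=> _ hc; split => //; rewrite add0n; apply: cov_CO hc.
case/andP => /CpiP [b bC ->] hs [hc hsc].
have lb := cov_CC aC bC hc.
have [h1 h2] := IH b bC hs hsc; split; first by rewrite -h1 lb addSn addnS.
case=> [|i] hi /=; first by rewrite rep1 lb addn1.
by rewrite h2 // lb; lia.
Qed.

Lemma dir1 x : F x -> Q (fun B => x (rep B)).
Proof.
move=> Fx; have [x0 x1 xc _ _] := FP Fx; split.
- by rewrite rep1.
- by case: Tb_prop => _ h1 h2; rewrite -(F_const Fx h2 h1 (rep_pi h2)).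
- by move=> B /CpiP [c cC ->]; rewrite rep1; apply: xc.
- by move=> B B' Bp _ [[h _] _]; apply: qle_F.
move=> s A hs Ap hsc.
have [h1 h2] := satchain_lv hat0C hs Ap hsc.
rewrite lvl_hat0 addn0 in h1.
have hA : (k < lvl (rep A))%N by rewrite -inO; apply: phi_sub Ap (rep_pi (phi_pi Ap)).
have [q [hq qa]] : exists q : PT, lvl q = k.+1 /\ ple q (rep A).
  case: (eqVneq (lvl (rep A)) k.+1) => [e|ne]; first by exists (rep A); rewrite /ple eqxx.
  have [q hq] : exists q : PT, lvl q = k.+1 by apply: (ex_lvl htau).
  by exists q; split => //; rewrite /ple hq; apply/orP; right; rewrite ltn_neqAle eq_sym ne hA.
apply: le_trans (mono_F Fx (_ : q \in O) qa); last by rewrite inO hq.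
rewrite -(big_map rep predT x); apply: chain_seq (FP Fx) _ _ hq; first by rewrite size_map.
by move=> i hi; rewrite h2 ?lvl_hat0 ?add0n // h1.
Qed.

Lemma pblock_C p : p \in C -> pblock pi p = [set p].
Proof. by move=> pC; apply: pblock_pi (Cpi_pi (sC pC)) (set11 p). Qed.

Lemma pblock_O p : p \in O -> pblock pi p \in phi.
Proof.
move=> pO; have [h1 h2] := pblock_mem p; case/piP: h1 => // /CpiP [c cC E].
by move: h2; rewrite E inE => /eqP pc; exfalso; apply: (CO cC); rewrite -pc.
Qed.

Definition gch (ps : 'I_k -> PT) (i : nat) : PT :=
  if i is i'.+1 then (if insub i' is Some o then ps o else hat0 tau) else hat0 tau.

Lemma gch_ord ps (i : 'I_k) : gch ps i.+1 = ps i.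
Proof. by rewrite /=; case: insubP => [o _ E|]; [congr ps; apply: val_inj | rewrite ltn_ord]. Qed.

Lemma gch_lvl (ps : 'I_k -> PT) : (forall i, lvl (ps i) = i.+1) -> forall i, (i <= k)%N -> lvl (gch ps i) = i.
Proof.
move=> hps [|i] hi //=; case: insubP => [o _ E|]; first by rewrite hps E.
by rewrite hi.
Qed.

Lemma gch_C (ps : 'I_k -> PT) : (forall i, lvl (ps i) = i.+1) -> forall i, (i <= k)%N -> gch ps i \in C.
Proof. by move=> hps i hi; rewrite inC gch_lvl. Qed.

Lemma satchain_build (ps : 'I_k -> PT) A : (forall i, lvl (ps i) = i.+1) -> qcov [set gch ps k] A ->
  forall n j, (j + n = k)%N ->
  satchain (@ple tau) pi [set gch ps j] [seq [set gch ps i] | i <- iota j.+1 n] A.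
Proof.
move=> hps hc; elim=> [|n IH] j hj; first by rewrite addn0 in hj; subst j.
change (iota j.+1 n.+1) with (j.+1 :: iota j.+2 n); rewrite map_cons.
split; last by apply: IH; rewrite -hj addSnnS.
apply: cov_CC_I; [apply: gch_C => //; lia | apply: gch_C => //; lia |].
by rewrite !(gch_lvl hps) //; lia.
Qed.

Lemma dir2 y : Q y -> F (fun p => y (pblock pi p)).
Proof.
case=> y0 y1 yC yO ych; apply: face_char_m; first split.
- by rewrite pblock_hat0.
- by rewrite pblock_hat1.
- by move=> p pC; rewrite pblock_C //; apply: yC; apply: sC.
- move=> a b aO bO ab; apply: (qmono yO (pblock_O aO)).
  have [h1 h2] := pblock_mem a; have [h3 h4] := pblock_mem b.
  by apply: t_step; apply: qrelI h1 h3 h2 h4 _; rewrite /ple (eqP ab) ltnSn orbT.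
- move=> ps q hps hq.
  have qO : q \in O by rewrite inO hq.
  have [A [Ap hc hAB]] := cov_top (gch_C hps (leqnn k)) (gch_lvl hps (leqnn k)) (pblock_O qO).
  have hs := satchain_build hps hc (n := k) (j := 0) (add0n k).
  have hall : all (fun B => B \in Cpi) [seq [set gch ps i] | i <- iota 1 k].
    apply/allP => B /mapP [i]; rewrite mem_iota => /andP [h1 h2] ->.
    by apply: sC; apply: gch_C => //; lia.
  have := ych _ A hall Ap hs.
  rewrite big_map -[1%N]/(1 + 0)%N iotaDl big_map.
  have -> : iota 0 k = index_iota 0 k by rewrite /index_iota subn0.
  rewrite big_mkord.
  move=> h; apply: le_trans (qmono yO Ap hAB).
  apply: le_trans h; rewrite le_eqVlt; apply/orP; left; apply/eqP; apply: eq_bigr => i _.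
  rewrite add1n gch_ord pblock_C //; rewrite inC hps; exact: ltn_ord.
move=> [[p|[a b]]|[f q]] /= vi ti.
- case: (eqVneq p (hat0 tau)) => [->|ne]; first by rewrite pblock_hat0.
  by exfalso; apply: (hC vi ne) => x' Fx'; apply: ti.
- case/and3P: vi => aO bO ab.
  have fab : fe a b.
    split => //; first by left.
    by move=> x' /ti /= /eqP; rewrite subr_eq0 eq_sym => /eqP.
  have [h1 h2] := pblock_mem a; have ap := pblock_O aO.
  have hb := phi_cl ap h2 (rt_step _ _ _ _ fab).
  by rewrite (pblock_pi h1 hb) subrr.
- case/andP: vi => /forallP hf /eqP hq; exfalso.
  apply: (hch (ps := fun j => f j) (q := q)) => //; first by move=> j; apply/eqP.
  by move=> x' /ti /= /eqP; rewrite subr_eq0 => /eqP.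
Qed.

Definition FB := pi :\ [set hat0 tau] :\ Tb.
Definition ind (B : {set PT}) (t : PT) : R := (t \in B)%:R.

Lemma FBP B : B \in FB -> [/\ B \in pi, B != [set hat0 tau] & B != Tb].
Proof. by rewrite !inE => /and3P [h1 h2 h3]. Qed.

Lemma FB_not B : B \in pi -> B \notin FB -> B = [set hat0 tau] \/ B = Tb.
Proof.
rewrite !inE => -> ; rewrite andbT negb_and !negbK => /orP [/eqP ->|/eqP ->]; by [right|left].
Qed.

Lemma FB_hat0 B : B \in FB -> hat0 tau \notin B.
Proof.
case/FBP => BP ne _; apply/negP => h; move/eqP: ne; apply.
exact: pi_eq BP hat0_pi h (set11 _).
Qed.

Lemma FB_hat1 B : B \in FB -> hat1 tau \notin B.
Proof.
case/FBP => BP _ ne; apply/negP => h; move/eqP: ne; apply.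
by case: Tb_prop => _ h1 h2; exact: pi_eq BP h2 h h1.
Qed.

Lemma ind_same B a b : B \in pi -> fe a b -> ind B a = ind B b.
Proof.
move=> BP fab; rewrite /ind; suff -> : (a \in B) = (b \in B) by [].
have [ap ah] := pblock_mem a; have [bp bh] := pblock_mem b.
have aO : a \in O by case: fab.
have Pp := pblock_O aO.
have hb := phi_cl Pp ah (rt_step _ _ _ _ fab).
have E : pblock pi b = pblock pi a by apply: pblock_pi.
apply/idP/idP => h.
  by rewrite -(pblock_pi BP h); rewrite -E.
by rewrite -(pblock_pi BP h) E.
Qed.


Lemma pert_FB B : B \in FB -> exists2 e, 0 < e & F (fun t => 1 * z t + e * ind B t).
Proof.
move=> BF; have [BP _ _] := FBP BF.
have vt : forall i, valid i -> tightc i -> form i (ind B) = 0.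
  move=> [[p|[a b]]|[f q]] /= vi ti.
  - case: (eqVneq p (hat0 tau)) => [->|ne]; first by rewrite /ind (negbTE (FB_hat0 BF)).
    by exfalso; apply: (hC vi ne) => x' Fx'; apply: ti.
  - case/and3P: vi => aO bO ab.
    have fab : fe a b.
      split => //; first by left.
      by move=> x' /ti /= /eqP; rewrite subr_eq0 eq_sym => /eqP.
    by rewrite (ind_same BP fab) subrr.
  - case/andP: vi => /forallP hf /eqP hq; exfalso.
    apply: (hch (ps := fun j => f j) (q := q)) => //; first by move=> j; apply/eqP.
    by move=> x' /ti /= /eqP; rewrite subr_eq0 => /eqP.
have v0 : ind B (hat0 tau) = 0 by rewrite /ind (negbTE (FB_hat0 BF)).
have v1 : ind B (hat1 tau) = 0 by rewrite /ind (negbTE (FB_hat1 BF)).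
have [e e0 he] := perturb_m Fz Hz v0 v1 vt.
exists e => //; apply: face_char_m he _ => i vi ti.
by rewrite form_lin (ti z Fz) (vt i vi ti) !mulr0 addr0.
Qed.

Lemma enum_val_FB (i : 'I_#|FB|) : enum_val i \in FB.
Proof. exact: enum_valP. Qed.

Lemma affdim_lower : affdim_ge F #|FB|.
Proof.
have [eps e0 hF'] := fin_all_exists2 (fun i : 'I_#|FB| => pert_FB (enum_val_FB i)).
exists z; split => //.
exists (fun i t => 1 * z t + eps i * ind (enum_val i) t); split => //.
set M := \matrix_(i, j) _.
pose N := \matrix_(j < #|PT|, i < #|FB|) (if enum_val j == rep (enum_val i) then (eps i)^-1 else 0).
have MN : M *m N = 1%:M.
  apply/matrixP => i i'; rewrite !mxE.
  rewrite (eq_bigr (fun j => eps i * ind (enum_val i) (enum_val j) * (if enum_val j == rep (enum_val i') then (eps i')^-1 else 0))); last first.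
    by move=> j _; rewrite !mxE mul1r addrC addKr.
  rewrite -(big_enum_val (fun t : PT => eps i * ind (enum_val i) t * (if t == rep (enum_val i') then (eps i')^-1 else 0))) /=.
  rewrite (bigD1 (rep (enum_val i'))) //= big1 ?addr0; last first.
    by move=> t /negbTE ->; rewrite mulr0.
  rewrite eqxx /ind.
  have [Pi' _ _] := FBP (enum_val_FB i'); have [Pi _ _] := FBP (enum_val_FB i).
  case: (eqVneq i i') => [<-|ne].
    by rewrite (rep_pi Pi) mulr1 mulfV //; apply: lt0r_neq0.
  have -> : (rep (enum_val i') \in enum_val i) = false.
    apply/negP => h; move/eqP: ne; apply; apply: enum_val_inj.
    exact: pi_eq Pi Pi' h (rep_pi Pi').
  by rewrite mulr0 mul0r.
rewrite /row_free eqn_leq rank_leq_row /=.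
by have := mxrankM_maxl M N; rewrite MN mxrank1.
Qed.

Lemma affdim_upper : ~ affdim_ge F #|FB|.+1.
Proof.
case=> x0 [Fx0 [ys [Fys rf]]].
set M := \matrix_(i, j) _ in rf.
pose A := \matrix_(i < #|FB|.+1, j < #|FB|) (ys i (rep (enum_val j)) - x0 (rep (enum_val j))).
pose E := \matrix_(j < #|FB|, t < #|PT|) ((enum_val t \in enum_val j)%:R : R).
have ME : M = A *m E.
  apply/matrixP => i t; rewrite !mxE.
  set u := enum_val t.
  rewrite (eq_bigr (fun j => (ys i (rep (enum_val j)) - x0 (rep (enum_val j))) * (u \in enum_val j)%:R)); last first.
    by move=> j _; rewrite !mxE.
  rewrite -(big_enum_val (fun B : {set PT} => (ys i (rep B) - x0 (rep B)) * (u \in B)%:R)) /=.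
  have [Pp uP] := pblock_mem u.
  have zero : forall B, B \in FB -> B != pblock pi u -> (ys i (rep B) - x0 (rep B)) * (u \in B)%:R = 0.
    move=> B BF ne; case: (boolP (u \in B)) => h; last by rewrite mulr0.
    by exfalso; move/eqP: ne; apply; case/FBP: BF => BP _ _; apply: pi_eq BP Pp h uP.
  case: (boolP (pblock pi u \in FB)) => PF.
    rewrite (bigD1 (pblock pi u)) //= big1 ?addr0; last by move=> B /andP [BF ne]; apply: zero.
    by rewrite uP mulr1 -!F_rep.
  rewrite big1; last first.
    by move=> B BF; apply: zero => //; apply/negP => /eqP E'; rewrite -E' BF in PF.
  have [h0 h1 _ _ _] := FP (Fys i); have [h0' h1' _ _ _] := FP Fx0.
  case: (FB_not Pp PF) => E'.
    by move: uP; rewrite E' inE => /eqP ->; rewrite h0 h0' subrr.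
  have [TP hT TPi] := Tb_prop; rewrite E' in uP.
  by rewrite (F_const (Fys i) TPi uP hT) (F_const Fx0 TPi uP hT) h1 h1' subrr.
move: rf; rewrite /row_free ME => /eqP h.
have := mxrankM_maxl A E; rewrite h => h2.
by have := leq_trans h2 (rank_leq_col A); rewrite ltnn.
Qed.

Lemma count_dim : (sumn tau - #|FB| = #|O| - #|phi|)%N.
Proof.
have [TP hT TPi] := Tb_prop.
have Tne : Tb != [set hat0 tau].
  apply/eqP => E; apply: (phi_Cpi TP); rewrite E; exact: sC hat0C.
have ha : #|pi| = #|FB|.+2.
  rewrite (cardsD1 [set hat0 tau] pi) hat0_pi (cardsD1 Tb (pi :\ [set hat0 tau])).
  by rewrite !inE Tne TP /= add1n add1n.
have hb : #|pi| = (#|phi| + #|C|)%N.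
  rewrite cardsU.
  have -> : phi :&: Cpi = set0.
    apply/setP => B; rewrite !inE; apply/negP => /andP [h1 h2]; exact: phi_Cpi h1 h2.
  rewrite cards0 subn0 card_in_imset //; move=> a b _ _; exact: set1_inj.
have hc : (#|phi| <= #|O|)%N.
  rewrite -(card_in_imset (f := rep) (D := mem phi)).
    apply: subset_leq_card; apply/subsetP => p /imsetP [B Bp ->]; exact: phi_sub Bp (rep_pi (phi_pi Bp)).
  move=> B1 B2 h1 h2 E; apply: pi_eq (phi_pi h1) (phi_pi h2) (rep_pi (phi_pi h1)) _.
  by rewrite E; apply: rep_pi; apply: phi_pi.
have hc1 : (0 < #|phi|)%N by apply/card_gt0P; exists Tb.
have hd : (#|C| + #|O| = (sumn tau).+2)%N.
  have -> : O = ~: C by apply/setP => p; rewrite !inE -ltnNge.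
  by rewrite cardsC (card_PT htau).
have he : (0 < #|C|)%N by apply/card_gt0P; exists (hat0 tau); exact: hat0C.
lia.
Qed.
End Z.

Lemma ple_hat0 p : ple (hat0 tau) p.
Proof.
rewrite /ple; case: (eqVneq (hat0 tau) p) => //= ne; rewrite lvl_hat0 lt0n; apply/negP => /eqP /lvl0 E.
by rewrite E eqxx in ne.
Qed.

Lemma ple_hat1 p : ple p (hat1 tau).
Proof.
rewrite /ple; case: (eqVneq p (hat1 tau)) => //= ne; rewrite lvl_hat1 ltn_neqAle lvl_le andbT.
by apply/negP => /eqP /lvlmax E; rewrite E eqxx in ne.
Qed.

Lemma main :
  let Cpi := [set [set c] | c in Cset tau k] in
  let pi := phi :|: Cpi in
  let Tb := pblock phi (hat1 tau) in
  let Q := quot_poly (@ple tau) pi Cpi phi [set hat0 tau] Tb in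
  [/\ compatible (@ple tau) pi,
      [set hat0 tau] \in pi /\ (forall B, B \in pi -> qle (@ple tau) pi [set hat0 tau] B),
      [/\ Tb \in phi, hat1 tau \in Tb & forall B, B \in pi -> qle (@ple tau) pi B Tb],
      [/\ (forall y : {set Pt tau} -> R, Q y -> F (fun p => y (pblock pi p))),
          (forall x, F x -> exists2 y, Q y & forall p, x p = y (pblock pi p)) &
          (forall y y' : {set Pt tau} -> R, Q y -> Q y' ->
             (forall p, y (pblock pi p) = y' (pblock pi p)) ->
             forall B, B \in pi -> y B = y' B)] &
      exists d, affdim F d /\ (sumn tau - d = #|Oset tau k| - #|phi|)%N].
Proof.
move=> Cpi' pi' Tb' Q'.
have [z [Fz Hz]] := relint_m.
have [TP hT TPi] := Tb_prop.
split.
- exact: compat Fz Hz.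
- split; first exact: hat0_pi.
  by move=> B BP; apply: t_step; apply: qrelI hat0_pi BP (set11 _) (rep_pi BP) (ple_hat0 _).
- split => // B BP; apply: t_step; exact: qrelI BP TPi (rep_pi BP) hT (ple_hat1 _).
- split.
  + exact: dir2 Fz Hz.
  + move=> x Fx; exists (fun B => x (rep B)); first exact: dir1.
    by move=> p; apply: F_rep.
  + by move=> y y' _ _ h B BP; rewrite -(pblock_rep BP); apply: h.
- exists #|FB|; split; last exact: count_dim.
  by split; [exact: affdim_lower Fz Hz | exact: affdim_upper].
Qed.
End Main.

Unset Implicit Arguments.
Local Open Scope ring_scope.

Theorem proposition3p4 (R : realFieldType) (tau : seq nat) (k : nat)
  (F : (Pt tau -> R) -> Prop) (phi : {set {set Pt tau}}) :
  all (fun t => 0 < t)%N tau -> (k <= size tau)%N ->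
  is_face (@chain_poly R tau k) F -> (exists x, F x) ->
  (forall p, p \in Cset tau k -> p != hat0 tau -> ~ (forall x, F x -> x p = 0)) ->
  (forall (ps : 'I_k -> Pt tau) (q : Pt tau),
      (forall i : 'I_k, lvl (ps i) = i.+1) -> lvl q = k.+1 ->
      ~ (forall x, F x -> \sum_(i < k) x (ps i) = x q)) ->
  is_assoc_partition F (Oset tau k) (@pcov tau) phi ->
  let Cpi := [set [set c] | c in Cset tau k] in
  let pi := phi :|: Cpi in
  let Tb := pblock phi (hat1 tau) in
  let Q := quot_poly (@ple tau) pi Cpi phi [set hat0 tau] Tb in
  [/\ compatible (@ple tau) pi,
      [set hat0 tau] \in pi /\ (forall B, B \in pi -> qle (@ple tau) pi [set hat0 tau] B),
      [/\ Tb \in phi, hat1 tau \in Tb & forall B, B \in pi -> qle (@ple tau) pi B Tb],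
      [/\ (forall y : {set Pt tau} -> R, Q y -> F (fun p => y (pblock pi p))),
          (forall x, F x -> exists2 y, Q y & forall p, x p = y (pblock pi p)) &
          (forall y y' : {set Pt tau} -> R, Q y -> Q y' ->
             (forall p, y (pblock pi p) = y' (pblock pi p)) ->
             forall B, B \in pi -> y B = y' B)] &
      exists d, affdim F d /\ (sumn tau - d = #|Oset tau k| - #|phi|)%N].
Proof.
move=> h1 h2 h3 h4 h5 h6 h7.
exact: main.
Qed.
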